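(* Fix $R>0$, $\theta=2^{2R}-1$, and $a_2\in(0,1/(1+\theta))$ (with $a_1=1-a_2>a_2$). Let $P_{\mathrm{SC}}(\rho)$ be the SC outage probability defined below. Then $$-\lim_{\rho\to\infty}\frac{\log P_{\mathrm{SC}}(\rho)}{\log\rho}=\min\{m_{sd}N_d,\ m_{sr}N_r,\ m_{rd}N_d\}.$$
   Context: Let $N_r,N_d$ be positive integers, $m_{sr},m_{sd},m_{rd}$ positive integers, and $\Omega_{sr},\Omega_{sd},\Omega_{rd}>0$. Let $\{G_{sr,i}\}_{i=1}^{N_r}$, $\{G_{sd,j}\}_{j=1}^{N_d}$, $\{G_{rd,k}\}_{k=1}^{N_d}$ be mutually independent random variables, where each $G_{sr,i}$ has the Gamma density $\frac{(m_{sr}/\Omega_{sr})^{m_{sr}}x^{m_{sr}-1}}{\Gamma(m_{sr})}e^{-m_{sr}x/\Omega_{sr}}$, $x>0$, and analogously $G_{sd,j}$ with $(m_{sd},\Omega_{sd})$ and $G_{rd,k}$ with $(m_{rd},\Omega_{rd})$. SC gains: $g_{sr}=\max_i G_{sr,i}$, $g_{sd}=\max_j G_{sd,j}$, $g_{rd}=\max_k G_{rd,k}$. For $\rho>0$ the outage probability is $P_{\mathrm{SC}}(\rho)=1-\Pr\big(\tfrac{a_1\rho g_{sd}}{a_2\rho g_{sd}+1}\ge\theta\big)\Pr\big(\tfrac{a_1\rho g_{sr}}{a_2\rho g_{sr}+1}\ge\theta,\ a_2\rho g_{sr}\ge\theta\big)\Pr(\rho g_{rd}\ge\theta)$. *)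

(* Defs.v *)
From HB Require Import structures.
From mathcomp Require Import all_boot all_order all_algebra.
From mathcomp Require Import all_classical all_reals all_analysis.
Set Implicit Arguments. Unset Strict Implicit. Unset Printing Implicit Defensive.
Import Order.TTheory GRing.Theory Num.Theory.
Import numFieldNormedType.Exports.
Local Open Scope classical_set_scope.
Local Open Scope ring_scope.

Section Defs.
Variable R : realType.

(* Gamma (Nakagami-m power) density with integer shape m and mean Om;
   Gamma(m) = (m-1)!. *)
Definition gamma_pdf (m : nat) (Om : R) (x : R) : R :=
  if 0 < x then
    (m%:R / Om) ^+ m * x ^+ m.-1 / (m.-1)`!%:R * expR (- (m%:R * x / Om))
  else 0.

Context {d : measure_display} {T : measurableType d}.

Definition has_gamma_law (P : probability T R) (m : nat) (Om : R)
    (X : T -> R) : Prop :=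
  measurable_fun setT X /\
  forall A : set R, measurable A ->
    P (X @^-1` A) = (\int[lebesgue_measure]_(x in A) (gamma_pdf m Om x)%:E)%E.

Definition mutually_independent (P : probability T R) (I : finType)
    (X : I -> T -> R) : Prop :=
  forall B : I -> set R, (forall i, measurable (B i)) ->
    fine (P (\bigcap_i (X i @^-1` B i))) = \prod_(i : I) fine (P (X i @^-1` B i)).

Definition join3 (n1 n2 : nat) (X1 : 'I_n1 -> T -> R) (X2 X3 : 'I_n2 -> T -> R) :
    'I_n1 + ('I_n2 + 'I_n2) -> T -> R :=
  fun k => match k with
           | inl i => X1 i
           | inr (inl j) => X2 j
           | inr (inr j) => X3 j
           end.

Definition sc_max (n : nat) (X : 'I_n -> T -> R) (t : T) : R :=
  \big[Num.max/0]_(i < n) X i t.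

Definition prR (P : probability T R) (A : set T) : R := fine (P A).

Definition P_SC (P : probability T R) (a1 a2 theta : R) (Nr Nd : nat)
    (Gsr : 'I_Nr -> T -> R) (Gsd Grd : 'I_Nd -> T -> R) (rho : R) : R :=
  1 - prR P [set t | theta <= a1 * rho * sc_max Gsd t / (a2 * rho * sc_max Gsd t + 1)]
    * prR P [set t | theta <= a1 * rho * sc_max Gsr t / (a2 * rho * sc_max Gsr t + 1)
                     /\ theta <= a2 * rho * sc_max Gsr t]
    * prR P [set t | theta <= rho * sc_max Grd t].

End Defs.

(* Main.v *)
Require Import Defs.
From HB Require Import structures.
From mathcomp Require Import all_boot all_order all_algebra.
From mathcomp Require Import all_classical all_reals all_analysis.
From mathcomp Require Import ring lra zify.
Import Order.TTheory GRing.Theory Num.Theory.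
Import numFieldNormedType.Exports.
Local Open Scope classical_set_scope.
Local Open Scope ring_scope.

Module Aux.
Import measurable_realfun.
Section All.
Variables (R : realType) (d : measure_display) (T : measurableType d) (P : probability T R).



Lemma theta_gt0 (Rt : R) : 0 < Rt -> 0 < 2 `^ (2 * Rt) - 1.
Proof.
move=> R0; rewrite subr_gt0.
have h2 : (0 : R) < 2 by [].
rewrite -[X in X `^ _](lnK h2) -expRM expR_gt1 mulr_gt0 //.
  by rewrite ln_gt0 // ltr1n.
by rewrite mulr_gt0.
Qed.

Lemma ev_sd (th a1 a2 r g : R) : 0 < a1 - a2 * th -> 0 < r -> 0 <= g -> 0 < a2 ->
  (th <= a1 * r * g / (a2 * r * g + 1)) = (th / (a1 - a2 * th) / r <= g).
Proof.
move=> D0 r0 g0 a0.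
have den : 0 < a2 * r * g + 1 by rewrite ltr_wpDl // !mulr_ge0 // ltW.
rewrite ler_pdivlMr // !ler_pdivrMr //.
apply/idP/idP => h; nra.
Qed.


Lemma ev_rd (th r g : R) : 0 < r -> (th <= r * g) = (th / r <= g).
Proof. by move=> r0; rewrite ler_pdivrMr // mulrC. Qed.

Lemma ev_a2 (th a2 r g : R) : 0 < r -> 0 < a2 -> (th <= a2 * r * g) = (th / a2 / r <= g).
Proof. by move=> r0 a0; rewrite !ler_pdivrMr //; congr (_ <= _); ring. Qed.

Lemma comb (A B C : R) : 0 <= A <= 1 -> 0 <= B <= 1 -> 0 <= C <= 1 ->
  [/\ A <= 1 - (1 - A) * (1 - B) * (1 - C), B <= 1 - (1 - A) * (1 - B) * (1 - C),
      C <= 1 - (1 - A) * (1 - B) * (1 - C) & 1 - (1 - A) * (1 - B) * (1 - C) <= A + B + C].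
Proof.
move=> /andP[A0 A1] /andP[B0 B1] /andP[C0 C1].
have hAB : 0 <= (1 - A) * (1 - B) by rewrite mulr_ge0 // subr_ge0.
have hAB1 : (1 - A) * (1 - B) <= 1 by nra.
split; nra.
Qed.

Lemma min3 (a b c : nat) : minn a (minn b c) = a \/ minn a (minn b c) = b \/ minn a (minn b c) = c.
Proof. lia. Qed.


Lemma grp_bounds (F lo hi C x : R) (m N : nat) : 0 <= lo -> 0 < C -> 0 < x ->
  lo * (C * x) ^+ m <= F <= hi * (C * x) ^+ m ->
  (lo * C ^+ m) ^+ N * x ^+ (m * N) <= F ^+ N <= (hi * C ^+ m) ^+ N * x ^+ (m * N).
Proof.
move=> l0 C0 x0 /andP[h1 h2].
have q0 : 0 <= lo * (C * x) ^+ m by rewrite mulr_ge0 // exprn_ge0 // ltW // mulr_gt0.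
have E : forall k, (k * C ^+ m) ^+ N * x ^+ (m * N) = (k * (C * x) ^+ m) ^+ N.
  by move=> k; rewrite exprM -exprMn [(C * x) ^+ m]exprMn mulrA.
rewrite !E; apply/andP; split; first by apply: lerXn2r; rewrite // nnegrE (le_trans q0).
apply: lerXn2r; rewrite // nnegrE ?(le_trans q0) //; exact: le_trans h2.
Qed.

Lemma log_limit (f : R -> R) (M : nat) (k1 k2 r0 : R) : 0 < k1 -> 0 < k2 ->
  (forall r, r0 < r -> k1 * (r^-1) ^+ M <= f r <= k2 * (r^-1) ^+ M) ->
  (fun r => ln (f r) / ln r) @ +oo --> (- M%:R : R).
Proof.
move=> k10 k20 hb; apply/cvgrPdist_le => eps e0.
pose K := `|ln k1| + `|ln k2|.
exists (Num.max r0 (Num.max 1 (expR (K / eps)))); split; first exact: num_real.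
move=> r; rewrite !gt_max => /and3P[hr0 hr1 hre].
have rp : 0 < r by apply: lt_trans hr1.
have lnr : 0 < ln r by rewrite ln_gt0.
have [hl hu] := andP (hb r hr0).
have Lk : forall k, 0 < k -> ln (k * (r^-1) ^+ M) = ln k - M%:R * ln r.
  move=> k k0; rewrite lnM ?posrE ?exprn_gt0 ?invr_gt0 //.
  rewrite lnXn ?invr_gt0 // lnV ?posrE // -mulr_natl; ring.
have p1 : 0 < k1 * (r^-1) ^+ M by rewrite mulr_gt0 // exprn_gt0 // invr_gt0.
have fp : 0 < f r by apply: lt_le_trans hl.
have p2 : 0 < k2 * (r^-1) ^+ M by apply: lt_le_trans hu.
have h1 : ln k1 - M%:R * ln r <= ln (f r) by rewrite -Lk // ler_ln.
have h2 : ln (f r) <= ln k2 - M%:R * ln r by rewrite -Lk // ler_ln.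
have hK : K <= eps * ln r.
  rewrite -ler_pdivrMl // mulrC -[K / eps]expRK ler_ln ?posrE ?expR_gt0 //.
  exact: ltW.
have n1 := ler_norm (ln k1); have n1' := ler_norm (- ln k1); rewrite normrN in n1'.
have n2 := ler_norm (ln k2); have n2' := ler_norm (- ln k2); rewrite normrN in n2'.
have -> : - M%:R - ln (f r) / ln r = - ((ln (f r) + M%:R * ln r) / ln r).
  by field; rewrite gt_eqF.
rewrite normrN normrM normfV [`|ln r|]gtr0_norm // ler_pdivrMr //.
apply: le_trans hK; rewrite ler_norml; apply/andP; split; rewrite /K; lra.
Qed.



Lemma pdf_meas m (Om : R) : measurable_fun setT (gamma_pdf m Om).
Proof.
rewrite /gamma_pdf; apply: measurable_fun_ifT.
- by apply: measurable_fun_ltr.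
- apply: measurable_funM; last first.
    apply: measurableT_comp; first exact: measurable_expR.
    apply: measurableT_comp; first exact: oppr_measurable.
    apply: measurable_funM; last exact: measurable_cst.
    apply: measurable_funM; first exact: measurable_cst.
    exact: measurable_id.
  apply: measurable_funM; last exact: measurable_cst.
  apply: measurable_funM; first exact: measurable_cst.
  apply: measurable_funX; exact: measurable_id.
- exact: measurable_cst.
Qed.

Lemma pdf_ge0 m (Om : R) x : 0 < Om -> 0 <= gamma_pdf m Om x.
Proof.
move=> O0; rewrite /gamma_pdf; case: ifP => // x0.
apply: mulr_ge0; last exact: expR_ge0.
apply: mulr_ge0; last by rewrite invr_ge0.
apply: mulr_ge0; last by rewrite exprn_ge0 // ltW.
by rewrite exprn_ge0 // divr_ge0 // ltW.
Qed.

Definition Kc m (Om : R) := (m%:R / Om) ^+ m / (m.-1)`!%:R.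

Lemma Kc_gt0 m (Om : R) : (0 < m)%N -> 0 < Om -> 0 < Kc m Om.
Proof.
move=> m0 O0; rewrite /Kc divr_gt0 //.
  by rewrite exprn_gt0 // divr_gt0 // ltr0n.
Qed.

Lemma pdf_pos m (Om : R) t : 0 < t ->
  gamma_pdf m Om t = Kc m Om * t ^+ m.-1 * expR (- (m%:R * t / Om)).
Proof. by move=> t0; rewrite /gamma_pdf t0 /Kc; ring. Qed.

Lemma pdf_up m (Om : R) x t : 0 < Om -> 0 < t -> t <= x ->
  gamma_pdf m Om t <= Kc m Om * x ^+ m.-1.
Proof.
move=> O0 t0 tx; rewrite pdf_pos //.
have K0 : 0 <= Kc m Om.
  by rewrite /Kc divr_ge0 // exprn_ge0 // divr_ge0 // ltW.
have e1 : expR (- (m%:R * t / Om)) <= 1.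
  rewrite expR_le1 oppr_le0; apply: divr_ge0; last exact: ltW.
  by rewrite mulr_ge0 // ltW.
have h2 : Kc m Om * t ^+ m.-1 <= Kc m Om * x ^+ m.-1.
  by rewrite ler_wpM2l // lerXn2r // nnegrE ltW // (lt_le_trans t0).
have h3 : 0 <= Kc m Om * t ^+ m.-1 by rewrite mulr_ge0 // exprn_ge0 // ltW.
rewrite -[X in _ <= X]mulr1; apply: ler_pM => //; exact: expR_ge0.
Qed.

Lemma pdf_lo m (Om : R) x t : 0 < Om -> 0 < x -> x <= 1 -> x / 2 <= t -> t <= x ->
  Kc m Om * (x / 2) ^+ m.-1 * expR (- (m%:R / Om)) <= gamma_pdf m Om t.
Proof.
move=> O0 x0 x1 lt tx.
have t0 : 0 < t by apply: lt_le_trans lt; rewrite divr_gt0.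
rewrite pdf_pos //.
have K0 : 0 <= Kc m Om.
  by rewrite /Kc divr_ge0 // exprn_ge0 // divr_ge0 // ltW.
apply: ler_pM.
- by rewrite mulr_ge0 // exprn_ge0 // divr_ge0 // ltW.
- exact: expR_ge0.
- by rewrite ler_wpM2l // lerXn2r // nnegrE ?ltW // divr_gt0.
- rewrite ler_expR lerN2.
  apply: ler_wpM2r; first by rewrite invr_ge0 ltW.
  rewrite -[X in _ <= X]mulr1; apply: ler_wpM2l => //; exact: le_trans tx x1.
Qed.

Lemma itv_int_eq m (Om : R) x : 0 < x ->
  (\int[lebesgue_measure]_(t in `]-oo, x[) (gamma_pdf m Om t)%:E =
   \int[lebesgue_measure]_(t in `]0%R, x[) (gamma_pdf m Om t)%:E)%E.
Proof.
move=> x0; rewrite integral_mkcond [RHS]integral_mkcond.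
apply: eq_integral => t _; rewrite /patch.
have E : forall (i : interval R), (t \in [set` i]) = (t \in i).
  by move=> i; apply/idP/idP => [/set_mem|/mem_set].
rewrite !E !in_itv /=.
case: (ltP 0 t) => t0 //=; case: (ltP t x) => //= _.
by rewrite /gamma_pdf ltNge t0.
Qed.

Lemma I_up m (Om : R) x : 0 < Om -> 0 < x ->
  (\int[lebesgue_measure]_(t in `]-oo, x[) (gamma_pdf m Om t)%:E <=
   (Kc m Om * x ^+ m.-1 * x)%:E)%E.
Proof.
move=> O0 x0; rewrite itv_int_eq //.
have h : (\int[lebesgue_measure]_(t in `]0%R, x[) (gamma_pdf m Om t)%:E <=
   \int[lebesgue_measure]_(t in `]0%R, x[) (cst (Kc m Om * x ^+ m.-1)%:E t))%E.
  apply: ge0_le_integral.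
  - exact: measurable_itv.
  - by move=> t _; rewrite lee_fin pdf_ge0.
  - apply/measurable_EFinP; apply: measurable_funS (pdf_meas m Om) => //.
  - exact: measurable_cst.
  - move=> t /=; rewrite in_itv /= => /andP[t0 tx].
    by rewrite lee_fin pdf_up // ltW.
apply: le_trans h _.
rewrite integral_cst //.
have L : lebesgue_measure (`]0%R, x[%classic : set R) = (x%:E - 0%:E)%E.
  by rewrite lebesgue_measure_itv /= lte_fin x0.
rewrite [X in (_ * X <= _)%E](_ : _ = (x%:E - 0%:E)%E); last exact: L.
by rewrite -EFinB -EFinM subr0.
Qed.

Lemma I_lo m (Om : R) x : 0 < Om -> 0 < x -> x <= 1 ->
  ((Kc m Om * (x / 2) ^+ m.-1 * expR (- (m%:R / Om)) * (x / 2))%:E <=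
  \int[lebesgue_measure]_(t in `]-oo, x[) (gamma_pdf m Om t)%:E)%E.
Proof.
move=> O0 x0 x1.
have K0 : 0 <= Kc m Om.
  by rewrite /Kc divr_ge0 // exprn_ge0 // divr_ge0 // ltW.
have Lge0 : 0 <= Kc m Om * (x / 2) ^+ m.-1 * expR (- (m%:R / Om)).
  by rewrite !mulr_ge0 // ?exprn_ge0 ?expR_ge0 // divr_ge0 // ltW.
have h1 : (\int[lebesgue_measure]_(t in `[(x / 2)%R, x[) (gamma_pdf m Om t)%:E <=
  \int[lebesgue_measure]_(t in `]-oo, x[) (gamma_pdf m Om t)%:E)%E.
  apply: ge0_subset_integral.
  - exact: measurable_itv.
  - exact: measurable_itv.
  - apply/measurable_EFinP; apply: measurable_funS (pdf_meas m Om) => //.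
  - by move=> t _; rewrite lee_fin pdf_ge0.
  - move=> t /=; rewrite !in_itv /= => /andP[_ ->] //.
apply: le_trans h1.
have h : (\int[lebesgue_measure]_(t in `[(x / 2)%R, x[)
      (cst (Kc m Om * (x / 2) ^+ m.-1 * expR (- (m%:R / Om)))%:E t) <=
    \int[lebesgue_measure]_(t in `[(x / 2)%R, x[) (gamma_pdf m Om t)%:E)%E.
  apply: ge0_le_integral.
  - exact: measurable_itv.
  - by move=> t _; rewrite lee_fin.
  - exact: measurable_cst.
  - apply/measurable_EFinP; apply: measurable_funS (pdf_meas m Om) => //.
  - move=> t /=; rewrite in_itv /= => /andP[t0 tx].
    by rewrite lee_fin pdf_lo // ltW.
apply: le_trans h.
rewrite integral_cst //.
have x2 : x / 2 < x by rewrite ltr_pdivrMr // ltr_pMr // ltr1n.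
have L : lebesgue_measure (`[(x / 2)%R, x[%classic : set R) = (x%:E - (x / 2)%:E)%E.
  by rewrite lebesgue_measure_itv /= lte_fin x2.
rewrite [X in (_ <= _ * X)%E](_ : _ = (x%:E - (x / 2)%:E)%E); last exact: L.
rewrite -EFinB -EFinM lee_fin; apply: ler_wpM2l => //.
rewrite [X in X - _](splitr x); lra.
Qed.

Lemma fine_between (a b : R) (I : \bar R) : (a%:E <= I)%E -> (I <= b%:E)%E ->
  a <= fine I <= b.
Proof.
case: I => [r| |] //= h1 h2; by rewrite -!lee_fin h1 h2.
Qed.

Lemma Fg_bounds m (Om : R) x : (0 < m)%N -> 0 < Om -> 0 < x -> x <= 1 ->
  Kc m Om * expR (- (m%:R / Om)) * (2^-1) ^+ m * x ^+ m <=
    fine (\int[lebesgue_measure]_(t in `]-oo, x[) (gamma_pdf m Om t)%:E)%E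
  <= Kc m Om * x ^+ m.
Proof.
move=> m0 O0 x0 x1; apply: fine_between.
- apply: le_trans _ (I_lo m Om x O0 x0 x1); rewrite lee_fin le_eqVlt; apply/orP; left; apply/eqP.
  have E : forall y : R, y ^+ m = y ^+ m.-1 * y by move=> y; rewrite -exprSr (prednK m0).
  rewrite (E x) (E 2^-1) exprMn; ring.
- apply: le_trans (I_up m Om x O0 x0) _; rewrite lee_fin le_eqVlt; apply/orP; left; apply/eqP.
  by rewrite -mulrA -exprSr (prednK m0).
Qed.



Lemma mi_inl (I1 I2 : finType) (X : I1 + I2 -> T -> R) :
  mutually_independent P X -> mutually_independent P (fun i => X (inl i)).
Proof.
move=> H B mB.
pose B' := fun k : I1 + I2 => match k with inl i => B i | inr _ => setT end.
have := H B' (ltac:(by case => // ?; exact: measurableT)).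
have -> : \bigcap_k X k @^-1` B' k = \bigcap_i X (inl i) @^-1` B i.
  apply/seteqP; split => t /= Ht.
  - by move=> i _; exact: (Ht (inl i)).
  - by case => [i|j] _ /=; [exact: Ht | done].
move=> ->; rewrite big_sumType /=.
rewrite [X in _ * X]big1 ?mulr1 // => j _.
by rewrite preimage_setT probability_setT.
Qed.

Lemma mi_inr (I1 I2 : finType) (X : I1 + I2 -> T -> R) :
  mutually_independent P X -> mutually_independent P (fun i => X (inr i)).
Proof.
move=> H B mB.
pose B' := fun k : I1 + I2 => match k with inr i => B i | inl _ => setT end.
have := H B' (ltac:(by case => // ?; exact: measurableT)).
have -> : \bigcap_k X k @^-1` B' k = \bigcap_i X (inr i) @^-1` B i.
  apply/seteqP; split => t /= Ht.
  - by move=> i _; exact: (Ht (inr i)).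
  - by case => [i|j] _ /=; [done | exact: Ht].
move=> ->; rewrite big_sumType /= [X in X * _]big1 ?mul1r // => j _.
by rewrite preimage_setT probability_setT.
Qed.

Lemma le_scmax n (X : 'I_n -> T -> R) t j : X j t <= sc_max X t.
Proof.
rewrite /sc_max.
have H : forall s, j \in s -> X j t <= \big[Num.max/0]_(i <- s) X i t.
  elim => // a s IH; rewrite in_cons big_cons => /orP [/eqP<-|/IH h].
    by rewrite le_max lexx.
  by rewrite le_max h orbT.
exact: (H _ (mem_index_enum j)).
Qed.

Lemma scmax_lt n (X : 'I_n -> T -> R) t c : 0 < c ->
  (forall j, X j t < c) -> sc_max X t < c.
Proof.
move=> c0 h; rewrite /sc_max.
by elim/big_ind: _ => // x y hx hy; rewrite gt_max hx hy.
Qed.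

Lemma event_eq n (X : 'I_n -> T -> R) c : 0 < c ->
  [set t | c <= sc_max X t] = ~` \bigcap_j (X j @^-1` `]-oo, c[).
Proof.
move=> c0; apply/seteqP; split => t /=.
- move=> h Hall.
  have : sc_max X t < c.
    apply: scmax_lt => // j; have := Hall j I; by rewrite /= in_itv /=.
  by rewrite ltNge h.
- move=> h; rewrite leNgt; apply/negP => hlt; apply: h => j _ /=.
  rewrite in_itv /=; apply: le_lt_trans hlt; exact: le_scmax.
Qed.

Definition Fg (m : nat) (Om c : R) : R :=
  fine (\int[lebesgue_measure]_(x in `]-oo, c[) (gamma_pdf m Om x)%:E)%E.

Lemma prob_event n (X : 'I_n -> T -> R) m Om c : 0 < c ->
  (forall j, has_gamma_law P m Om (X j)) -> mutually_independent P X ->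
  prR P [set t | c <= sc_max X t] = 1 - (Fg m Om c) ^+ n
  /\ 0 <= (Fg m Om c) ^+ n <= 1.
Proof.
move=> c0 hlaw hind.
have mpre : forall j, measurable (X j @^-1` `]-oo, c[).
  move=> j; rewrite -[_ @^-1` _]setTI; apply: (hlaw j).1 => //; exact: measurable_itv.
have mI : measurable (\bigcap_j (X j @^-1` `]-oo, c[)).
  by apply: fin_bigcap_measurable => //; exact: finite_finset.
have eq1 : fine (P (\bigcap_j (X j @^-1` `]-oo, c[))) = (Fg m Om c) ^+ n.
  rewrite hind; last by move=> j; exact: measurable_itv.
  rewrite (eq_bigr (fun _ => Fg m Om c)); last first.
    by move=> j _; rewrite (hlaw j).2 //; exact: measurable_itv.
  by rewrite prodr_const card_ord.
split.
- rewrite /prR event_eq // probability_setC // fineB ?fin_num_measure //.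
  by rewrite eq1.
- rewrite -eq1; apply/andP; split.
    by apply: fine_ge0; exact: measure_ge0.
  rewrite -lee_fin fineK ?fin_num_measure //; exact: probability_le1.
Qed.



Lemma grp_asym n (X : 'I_n -> T -> R) m (Om C : R) : (0 < m)%N -> 0 < Om -> 0 < C ->
  (forall j, has_gamma_law P m Om (X j)) -> mutually_independent P X ->
  exists lo hi, 0 < lo /\ 0 < hi /\ forall rho, Num.max 1 C <= rho ->
   exists A, prR P [set t | C / rho <= sc_max X t] = 1 - A /\ 0 <= A <= 1 /\
     lo * (rho^-1) ^+ (m * n) <= A <= hi * (rho^-1) ^+ (m * n).
Proof.
move=> m0 O0 C0 hlaw hind.
pose c1 := Kc m Om * expR (- (m%:R / Om)) * (2^-1) ^+ m.
have K0 := Kc_gt0 m Om m0 O0.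
have c10 : 0 < c1.
  rewrite /c1; apply: mulr_gt0; first by apply: mulr_gt0 => //; exact: expR_gt0.
  by rewrite exprn_gt0 // invr_gt0.
exists ((c1 * C ^+ m) ^+ n), ((Kc m Om * C ^+ m) ^+ n); split.
  by rewrite exprn_gt0 // mulr_gt0 // exprn_gt0.
split; first by rewrite exprn_gt0 // mulr_gt0 // exprn_gt0.
move=> rho; rewrite ge_max => /andP[r1 rC].
have r0 : 0 < rho by apply: lt_le_trans r1.
have x0 : 0 < rho^-1 by rewrite invr_gt0.
have cx0 : 0 < C / rho by rewrite divr_gt0.
have cx1 : C / rho <= 1 by rewrite ler_pdivrMr // mul1r.
have [e b] := @prob_event n X m Om (C / rho) cx0 hlaw hind.
exists (Fg m Om (C / rho) ^+ n); split => //; split => //.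
apply: grp_bounds => //; first exact: ltW.
exact: Fg_bounds.
Qed.

Lemma scmax_ge0 n (X : 'I_n -> T -> R) t : 0 <= sc_max X t.
Proof. by rewrite /sc_max; elim/big_rec: _ => // i x _ hx; rewrite le_max hx orbT. Qed.

End All.
End Aux.
Import Aux.

Theorem mainTheorem10 (R : realType) (d : measure_display) (T : measurableType d)
    (P : probability T R)
    (Nr Nd msr msd mrd : nat) (Osr Osd Ord : R)
    (Gsr : 'I_Nr -> T -> R) (Gsd Grd : 'I_Nd -> T -> R)
    (Rt a2 : R) :
  (0 < Nr)%N -> (0 < Nd)%N -> (0 < msr)%N -> (0 < msd)%N -> (0 < mrd)%N ->
  0 < Osr -> 0 < Osd -> 0 < Ord ->
  (forall i, has_gamma_law P msr Osr (Gsr i)) ->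
  (forall j, has_gamma_law P msd Osd (Gsd j)) ->
  (forall k, has_gamma_law P mrd Ord (Grd k)) ->
  mutually_independent P (join3 Gsr Gsd Grd) ->
  0 < Rt ->
  let theta := 2 `^ (2 * Rt) - 1 in
  0 < a2 -> a2 < 1 / (1 + theta) ->
  let a1 := 1 - a2 in
  (fun rho => ln (P_SC P a1 a2 theta Gsr Gsd Grd rho) / ln rho) @ +oo%R
    --> (- (minn (msd * Nd) (minn (msr * Nr) (mrd * Nd)))%:R : R).
Proof.
move=> Nr0 Nd0 msr0 msd0 mrd0 Osr0 Osd0 Ord0 lsr lsd lrd hind Rt0 theta a20 a2lt a1.
have th0 : 0 < theta by exact: theta_gt0.
have D0 : 0 < a1 - a2 * theta.
  have t1 : 0 < 1 + theta by rewrite addr_gt0.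
  move: a2lt; rewrite ltr_pdivlMr // /a1 => h; lra.
have isr : mutually_independent P Gsr by exact: (@mi_inl R d T P _ _ _ hind).
have isd : mutually_independent P Gsd.
  exact: (@mi_inl R d T P _ _ _ (@mi_inr R d T P _ _ _ hind)).
have ird : mutually_independent P Grd.
  exact: (@mi_inr R d T P _ _ _ (@mi_inr R d T P _ _ _ hind)).
pose Csd := theta / (a1 - a2 * theta).
have [Csr eCsr] : {Csr | Csr = Num.max Csd (theta / a2)} by exists (Num.max Csd (theta / a2)).
pose Crd := theta.
have Csd0 : 0 < Csd by rewrite divr_gt0.
have Csr0 : 0 < Csr by rewrite eCsr lt_max Csd0.
have Crd0 : 0 < Crd by [].
have [lo1 [hi1 [l1 [h1 G1]]]] := @grp_asym R d T P Nd Gsd msd Osd Csd msd0 Osd0 Csd0 lsd isd.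
have [lo2 [hi2 [l2 [h2 G2]]]] := @grp_asym R d T P Nr Gsr msr Osr Csr msr0 Osr0 Csr0 lsr isr.
have [lo3 [hi3 [l3 [h3 G3]]]] := @grp_asym R d T P Nd Grd mrd Ord Crd mrd0 Ord0 Crd0 lrd ird.
pose r0 := Num.max 1 (Num.max Csd (Num.max Csr Crd)).
apply: (@log_limit R _ _ (Num.min lo1 (Num.min lo2 lo3)) (hi1 + hi2 + hi3) r0).
- by rewrite !lt_min l1 l2 l3.
- by rewrite !addr_gt0.
move=> rho; rewrite /r0 !gt_max => /and4P[hr1 hsd hsr hrd].
have hm : forall C, C < rho -> Num.max 1 C <= rho.
  by move=> C hC; rewrite ge_max (ltW hr1) (ltW hC).
have rp : 0 < rho by apply: lt_trans hr1.
have [A [eA [bA lA]]] := G1 rho (hm _ hsd).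
have [B [eB [bB lB]]] := G2 rho (hm _ hsr).
have [C [eC [bC lC]]] := G3 rho (hm _ hrd).
have Esd : [set t | theta <= a1 * rho * sc_max Gsd t / (a2 * rho * sc_max Gsd t + 1)]
    = [set t | Csd / rho <= sc_max Gsd t].
  by apply/seteqP; split => t /=; rewrite ev_sd ?scmax_ge0.
have Esr : [set t | theta <= a1 * rho * sc_max Gsr t / (a2 * rho * sc_max Gsr t + 1)
                     /\ theta <= a2 * rho * sc_max Gsr t]
    = [set t | Csr / rho <= sc_max Gsr t].
  have key : forall g, (Num.max Csd (theta / a2) / rho <= g) = (Csd / rho <= g) && (theta / a2 / rho <= g).
    by move=> g; rewrite [LHS]ler_pdivrMr // ge_max -!ler_pdivrMr.
  apply/seteqP; split => t /=; rewrite ev_sd ?scmax_ge0 // ev_a2 // eCsr key.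
  - by move=> [h h']; apply/andP; split.
  - by case/andP => h h'; split.
have Erd : [set t | theta <= rho * sc_max Grd t] = [set t | Crd / rho <= sc_max Grd t].
  by apply/seteqP; split => t /=; rewrite ev_rd.
rewrite /P_SC Esd Esr Erd eA eB eC.
have [c1 c2 c3 c4] := @comb R A B C bA bB bC.
set x := rho^-1 in lA lB lC *.
have x0 : 0 <= x by rewrite ltW // invr_gt0.
have x1 : x <= 1 by rewrite invf_le1 // ltW.
set M := minn (msd * Nd) (minn (msr * Nr) (mrd * Nd)).
have xM : 0 <= x ^+ M by rewrite exprn_ge0.
apply/andP; split.
- have k1 : Num.min lo1 (Num.min lo2 lo3) <= lo1 by rewrite ge_min lexx.
  have k2 : Num.min lo1 (Num.min lo2 lo3) <= lo2 by rewrite !ge_min lexx orbT.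
  have k3 : Num.min lo1 (Num.min lo2 lo3) <= lo3 by rewrite !ge_min lexx !orbT.
  case: (min3 (msd * Nd) (msr * Nr) (mrd * Nd)) => [hM|[hM|hM]]; rewrite /M hM.
  + apply: le_trans c1; apply: le_trans (andP lA).1.
    by apply: ler_wpM2r => //; rewrite exprn_ge0.
  + apply: le_trans c2; apply: le_trans (andP lB).1.
    by apply: ler_wpM2r => //; rewrite exprn_ge0.
  + apply: le_trans c3; apply: le_trans (andP lC).1.
    by apply: ler_wpM2r => //; rewrite exprn_ge0.
- have q1 : hi1 * x ^+ (msd * Nd) <= hi1 * x ^+ M.
    by apply: ler_wpM2l; [exact: ltW | apply: ler_wiXn2l => //; exact: geq_minl].
  have q2 : hi2 * x ^+ (msr * Nr) <= hi2 * x ^+ M.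
    by apply: ler_wpM2l; [exact: ltW | apply: ler_wiXn2l => //; apply: leq_trans (geq_minr _ _) _; exact: geq_minl].
  have q3 : hi3 * x ^+ (mrd * Nd) <= hi3 * x ^+ M.
    by apply: ler_wpM2l; [exact: ltW | apply: ler_wiXn2l => //; apply: leq_trans (geq_minr _ _) _; exact: geq_minr].
  have u1 := (andP lA).2; have u2 := (andP lB).2; have u3 := (andP lC).2.
  apply: le_trans c4 _; rewrite !mulrDl; apply: lerD; first apply: lerD.
  + exact: le_trans u1 q1.
  + exact: le_trans u2 q2.
  + exact: le_trans u3 q3.
Qed.
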